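(* Let $\mathfrak g$ be a finite-dimensional real Lie algebra that has an abelian ideal of codimension one. Then $\mathfrak g$ admits an inner product with a geodesic basis, unless $\mathfrak g$ is isomorphic to $\mathcal A_n$ for some $n\ge1$.
   Context: For an inner product $\langle\cdot,\cdot\rangle$ on a real Lie algebra $\mathfrak g$, a nonzero $X\in\mathfrak g$ is a geodesic element if $\langle X,[X,Y]\rangle=0$ for all $Y\in\mathfrak g$; a geodesic basis is a basis consisting of geodesic elements. For $n\ge1$, $\mathcal A_n$ denotes the $(n+1)$-dimensional real Lie algebra with basis $\{Y,X_1,\dots,X_n\}$ and brackets $[Y,X_i]=X_i$, $[X_i,X_j]=0$. *)

(* Defs.v *)
From HB Require Import structures.
From mathcomp Require Import all_boot all_order all_algebra.
From mathcomp Require Import reals.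
Set Implicit Arguments. Unset Strict Implicit. Unset Printing Implicit Defensive.
Import Order.TTheory GRing.Theory Num.Theory.
Local Open Scope ring_scope.

Section LieDefs.
Variable R : realFieldType.
Variable V : vectType R.

Definition bracket_bilinear (br : V -> V -> V) : Prop :=
  forall (a : R) (x y z : V),
    br (a *: x + y) z = a *: br x z + br y z /\
    br z (a *: x + y) = a *: br z x + br z y.

Definition lie_bracket (br : V -> V -> V) : Prop :=
  [/\ bracket_bilinear br,
      (forall x, br x x = 0) &
      (forall x y z, br x (br y z) + br y (br z x) + br z (br x y) = 0)].

Definition inner_product (ip : V -> V -> R) : Prop :=
  [/\ (forall (a : R) (x y z : V), ip (a *: x + y) z = a * ip x z + ip y z),
      (forall x y, ip x y = ip y x) &
      (forall x, x != 0 -> 0 < ip x x)].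

Definition geodesic_element (ip : V -> V -> R) (br : V -> V -> V) (X : V) : Prop :=
  X != 0 /\ forall Y, ip X (br X Y) = 0.

Definition has_geodesic_basis (ip : V -> V -> R) (br : V -> V -> V) : Prop :=
  exists B : seq V, basis_of fullv B /\ forall X, X \in B -> geodesic_element ip br X.

Definition has_abelian_ideal_codim1 (br : V -> V -> V) : Prop :=
  exists I : {vspace V},
    [/\ (\dim I).+1 = \dim (fullv : {vspace V}),
        (forall x y, y \in I -> br x y \in I) &
        (forall x y, x \in I -> y \in I -> br x y = 0)].
End LieDefs.

(* The Lie algebra A_n realised on 'rV[R]_(n.+1): coordinate 0 is Y,
   coordinate i (1 <= i <= n) is X_i; [Y, X_i] = X_i, [X_i, X_j] = 0.
   Extended bilinearly: [a, b] = a_0 * (b - b_0 Y) - b_0 * (a - a_0 Y). *)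
Definition A_bracket (R : realFieldType) (n : nat) (a b : 'rV[R]_n.+1) : 'rV[R]_n.+1 :=
  \row_(j < n.+1) (if j == ord0 then 0 else a ord0 ord0 * b ord0 j - b ord0 ord0 * a ord0 j).

Definition isomorphic_to_A (R : realFieldType) (V : vectType R) (br : V -> V -> V)
    (n : nat) : Prop :=
  exists f : V -> 'rV[R]_n.+1,
    [/\ (forall (a : R) (x y : V), f (a *: x + y) = a *: f x + f y),
        bijective f &
        (forall x y, f (br x y) = A_bracket (f x) (f y))].

(* Main.v *)
Require Import Defs.
From HB Require Import structures.
From mathcomp Require Import all_boot all_order all_algebra.
From mathcomp Require Import reals.
From mathcomp Require Import ring lra.
From Stdlib Require Import Classical.
Set Implicit Arguments. Unset Strict Implicit. Unset Printing Implicit Defensive.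
Import Order.TTheory GRing.Theory Num.Theory.
Local Open Scope ring_scope.

Lemma xxx_eq0 (M : zmodType) (x : M) : x = x + x -> x = 0.
Proof. by move=> h; have := congr1 (fun t => t - x) h; rewrite subrr addrK. Qed.

Section Lie.
Variables (R : realFieldType) (V : vectType R) (br : V -> V -> V).
Hypothesis hL : lie_bracket br.

Let hB : bracket_bilinear br. Proof. by case: hL. Qed.

Lemma br0l z : br 0 z = 0.
Proof.
by have := (hB 1 0 0 z).1; rewrite !scale1r addr0 => h; exact: xxx_eq0 h.
Qed.
Lemma br0r z : br z 0 = 0.
Proof.
by have := (hB 1 0 0 z).2; rewrite !scale1r addr0 => h; exact: xxx_eq0 h.
Qed.
Lemma brDl x y z : br (x + y) z = br x z + br y z.
Proof. by have := (hB 1 x y z).1; rewrite !scale1r. Qed.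
Lemma brDr x y z : br z (x + y) = br z x + br z y.
Proof. by have := (hB 1 x y z).2; rewrite !scale1r. Qed.
Lemma brZl a x z : br (a *: x) z = a *: br x z.
Proof. by have := (hB a x 0 z).1; rewrite !addr0 br0l addr0. Qed.
Lemma brZr a x z : br z (a *: x) = a *: br z x.
Proof. by have := (hB a x 0 z).2; rewrite !addr0 br0r addr0. Qed.
Lemma brxx x : br x x = 0. Proof. by case: hL. Qed.
Lemma br_anti x y : br x y = - br y x.
Proof.
have := brxx (x + y); rewrite brDl !brDr !brxx add0r addr0 => /eqP.
by rewrite addr_eq0 => /eqP.
Qed.
Lemma brNl x y : br (- x) y = - br x y.
Proof. by rewrite -scaleN1r brZl scaleN1r. Qed.
Lemma brNr x y : br y (- x) = - br y x.
Proof. by rewrite -scaleN1r brZr scaleN1r. Qed.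
Lemma brBl x y z : br (x - y) z = br x z - br y z.
Proof. by rewrite brDl brNl. Qed.
Lemma brBr x y z : br z (x - y) = br z x - br z y.
Proof. by rewrite brDr brNr. Qed.
End Lie.

Section IP.
Variables (R : realFieldType) (V : vectType R) (ip : V -> V -> R).
Hypothesis hI : inner_product ip.
Let hl : forall (a : R) (x y z : V), ip (a *: x + y) z = a * ip x z + ip y z.
Proof. by case: hI. Qed.
Let hs : forall x y, ip x y = ip y x. Proof. by case: hI. Qed.
Lemma ip0l z : ip 0 z = 0.
Proof.
by have := hl 1 0 0 z; rewrite scale1r addr0 mul1r => h; exact: xxx_eq0 h.
Qed.
Lemma ipDl x y z : ip (x + y) z = ip x z + ip y z.
Proof. by have := hl 1 x y z; rewrite scale1r mul1r. Qed.
Lemma ipZl a x z : ip (a *: x) z = a * ip x z.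
Proof. by have := hl a x 0 z; rewrite !addr0 ip0l addr0. Qed.
Lemma ipDr x y z : ip z (x + y) = ip z x + ip z y.
Proof. by rewrite hs ipDl !(hs z). Qed.
Lemma ipZr a x z : ip z (a *: x) = a * ip z x.
Proof. by rewrite hs ipZl (hs z). Qed.
Lemma ip0r z : ip z 0 = 0. Proof. by rewrite hs ip0l. Qed.
Lemma ipNr x z : ip z (- x) = - ip z x.
Proof. by rewrite -scaleN1r ipZr mulN1r. Qed.
Lemma ipNl x z : ip (- x) z = - ip x z.
Proof. by rewrite -scaleN1r ipZl mulN1r. Qed.
Lemma ipBr x y z : ip z (x - y) = ip z x - ip z y.
Proof. by rewrite ipDr ipNr. Qed.
Lemma ipBl x y z : ip (x - y) z = ip x z - ip y z.
Proof. by rewrite ipDl ipNl. Qed.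
End IP.

Section IPW.
Variables (R : realFieldType) (V : vectType R) (n : nat) (e : n.-tuple V).
Hypothesis he : basis_of fullv e.
Variable lam : 'I_n -> R.
Hypothesis hlam : forall i, 0 < lam i.

Definition ipw (x y : V) : R := \sum_(i < n) lam i * coord e i x * coord e i y.

Lemma ipw_ip : inner_product ipw.
Proof.
split.
- move=> a x y z; rewrite /ipw mulr_sumr -big_split /=; apply: eq_bigr => i _.
  by rewrite linearP /=; ring.
- by move=> x y; rewrite /ipw; apply: eq_bigr => i _; ring.
- move=> x nx0.
  have hge : forall i : 'I_n, true -> 0 <= lam i * coord e i x * coord e i x.
    by move=> i _; rewrite -mulrA mulr_ge0 ?(ltW (hlam i)) // -expr2 sqr_ge0.
  rewrite lt_def sumr_ge0 ?andbT //.
  apply/negP => /eqP/(psumr_eq0P hge) h; move/negP: nx0; apply; apply/eqP.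
  rewrite (coord_basis he (memvf x)) big1 // => i _.
  have /eqP := h i isT; rewrite -mulrA mulf_eq0 (gt_eqF (hlam i)) /=.
  by rewrite mulf_eq0 orbb => /eqP ->; rewrite scale0r.
Qed.

Lemma ipw_e (j : 'I_n) u : ipw e`_j u = lam j * coord e j u.
Proof.
rewrite /ipw (bigD1 j) //= coord_free ?(basis_free he) // eqxx mulr1 big1 ?addr0 //.
by move=> i /negPf ij; rewrite coord_free ?(basis_free he) // eq_sym ij mulr0 mul0r.
Qed.
End IPW.

Section Main.
Variables (R : realFieldType) (V : vectType R) (br : V -> V -> V) (I : {vspace V}).
Hypotheses (hL : lie_bracket br) (hdim : (\dim I).+1 = \dim (fullv : {vspace V}))
  (hideal : forall x y, y \in I -> br x y \in I)
  (hab : forall x y, x \in I -> y \in I -> br x y = 0).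

Definition Y := vpick (I^C)%VS.

Lemma IC_line : (I^C)%VS = <[Y]>%VS.
Proof.
have d1 : \dim (I^C)%VS = 1%N by rewrite dimv_compl -hdim subSnn.
have nz : Y != 0 by rewrite /Y vpick0 -dimv_eq0 d1.
apply/eqP; rewrite eq_sym eqEdim -memvE memv_pick d1 dim_vline nz //.
Qed.

Lemma Y_notin : Y \notin I.
Proof.
have d1 : \dim (I^C)%VS = 1%N by rewrite dimv_compl -hdim subSnn.
have nz : Y != 0 by rewrite /Y vpick0 -dimv_eq0 d1.
apply/negP => YI; move/negP: nz; apply.
by rewrite -memv0 -(capv_compl I) memv_cap YI memv_pick.
Qed.

Lemma fullvE : (fullv = I + <[Y]>)%VS.
Proof. by rewrite -IC_line addv_complf. Qed.

Lemma decomp Z : exists z a, z \in I /\ Z = z + a *: Y.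
Proof.
have : Z \in (I + <[Y]>)%VS by rewrite -fullvE memvf.
case/memv_addP => z zI [u /vlineP [a ->] ->]; by exists z, a.
Qed.

Lemma basis_ext Y0 X : Y \in <[Y0]>%VS -> (I <= <<X>>)%VS -> (size X <= \dim I)%N ->
  basis_of fullv (Y0 :: X).
Proof.
move=> YY0 IX sX; rewrite basisEdim /= -hdim ltnS sX andbT span_cons fullvE.
by rewrite addvC addvS // -memvE.
Qed.

Lemma splitI n (e : n.+1.-tuple V) : (forall i : 'I_n, e`_(lift ord0 i) \in I) ->
  basis_of fullv e -> forall z, z - coord e ord0 z *: e`_0 \in I.
Proof.
move=> eI hb z; have := coord_basis hb (memvf z); rewrite big_ord_recl /= => ez.
rewrite {1}ez addrC addKr memv_suml // => i _; rewrite memvZ //; exact: eI.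
Qed.

Lemma coordY0 n (e : n.+1.-tuple V) : e`_0 \notin I ->
  (forall i : 'I_n, e`_(lift ord0 i) \in I) ->
  basis_of fullv e -> forall z, z \in I -> coord e ord0 z = 0.
Proof.
move=> Y0I eI hb z zI; apply/eqP/negP => c0; move/negP: Y0I; apply.
have h := splitI eI hb z.
have -> : e`_0 = (coord e ord0 z)^-1 *: (z - (z - coord e ord0 z *: e`_0)).
  rewrite subKr scalerK //; exact/negP.
by rewrite memvZ // memvB.
Qed.

Lemma indep2 (u v : V) (a b : R) : u != 0 -> v \notin <[u]>%VS ->
  a *: u + b *: v = 0 -> a = 0 /\ b = 0.
Proof.
move=> u0 vu h.
have b0 : b = 0.
  apply/eqP/negP => /negP b0; move/negP: vu; apply.
  have -> : v = b^-1 *: (- (a *: u)).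
    have hb : b *: v = - (a *: u) by rewrite -(addKr (a *: u) (b *: v)) h addr0.
    by rewrite -hb scalerK.
  by rewrite memvZ // memvN memvZ // memv_line.
split=> //; move: h; rewrite b0 scale0r addr0 => /eqP.
by rewrite scaler_eq0 (negPf u0) orbF => /eqP.
Qed.

Lemma scalar_case : (forall v, v \in I -> br Y v \in <[v]>%VS) ->
  exists c, forall v, v \in I -> br Y v = c *: v.
Proof.
move=> h; case: (eqVneq I 0%VS) => [I0|Inz].
  exists 0 => v vI; have : v \in 0%VS by rewrite -I0.
  by rewrite memv0 => /eqP ->; rewrite (br0r hL) scaler0.
have [u uI u0] : exists2 u, u \in I & u != 0.
  by exists (vpick I); rewrite ?memv_pick ?vpick0.
have /vlineP [c hc] := h u uI; exists c => v vI.
have [/vlineP [k ->]|vu] := boolP (v \in <[u]>%VS).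
  by rewrite brZr // hc scalerA mulrC -scalerA.
have /vlineP [cv hcv] := h v vI.
have /vlineP [d hd] := h (u + v) (memvD uI vI).
have : (c - d) *: u + (cv - d) *: v = 0.
  by rewrite !scalerBl addrACA -opprD -scalerDr -hd (brDr hL) hc hcv subrr.
case/(indep2 u0 vu) => /subr0_eq hcd /subr0_eq hcvd.
by rewrite hcv hcvd hcd.
Qed.

Lemma G2 Z : forall ip, inner_product ip -> (forall u, u \in I -> ip Y u = 0) ->
  ip Y (br Y Z) = 0.
Proof.
move=> ip hip hY; have [z [a [zI ->]]] := decomp Z.
by rewrite brDr // brZr // brxx // scaler0 addr0 hY // hideal.
Qed.

Lemma G1 ip x : inner_product ip -> x \in I -> ip x (br Y x) = 0 ->
  forall Z, ip x (br x Z) = 0.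
Proof.
move=> hip xI hq Z; have [z [a [zI ->]]] := decomp Z.
rewrite brDr // brZr // hab // add0r (br_anti hL x) ipZr // ipNr // hq.
by rewrite oppr0 mulr0.
Qed.

Lemma abelian_case c : (forall v, v \in I -> br Y v = c *: v) ->
  (c = 0 \/ I = 0%VS) -> forall x y, br x y = 0.
Proof.
move=> hc h x y; have [x1 [a [x1I ->]]] := decomp x.
have [y1 [b [y1I ->]]] := decomp y.
rewrite (brDl hL) !(brDr hL) !(brZl hL) !(brZr hL) (brxx hL) (hab x1I y1I).
rewrite (br_anti hL x1) (hc _ x1I) (hc _ y1I).
rewrite scaler0 add0r.
case: h => [c0|I0]; first by rewrite c0 !scale0r oppr0 !scaler0 !addr0.
have x0 : x1 = 0 by apply/eqP; rewrite -memv0 -I0.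
have y0 : y1 = 0 by apply/eqP; rewrite -memv0 -I0.
by rewrite x0 y0 !scaler0 oppr0 !scaler0 !addr0.
Qed.
Lemma iso_case c : c != 0 -> (forall v, v \in I -> br Y v = c *: v) ->
  isomorphic_to_A br (\dim I).
Proof.
move=> c0 hc.
pose Y' := c^-1 *: Y; pose X := vbasis I.
pose e : (\dim I).+1.-tuple V := cons_tuple Y' X.
have hb : basis_of fullv e.
  apply: basis_ext; last by rewrite size_tuple.
    by rewrite /Y' -{1}(scalerKV c0 Y) memvZ // memv_line.
  by rewrite (span_basis (vbasisP I)).
have eI : forall i : 'I_(\dim I), e`_(lift ord0 i) \in I.
  move=> i; apply: vbasis_mem; rewrite /e lift0 /=; apply: mem_nth.
  by rewrite size_tuple.
have hY' : forall z, z \in I -> br Y' z = z.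
  by move=> z zI; rewrite /Y' (brZl hL) hc // scalerK.
have e0 : e`_0 = Y' by [].
have fr := basis_free hb.
exists (fun x => \row_j coord e j x); split.
- by move=> a x y; apply/rowP => j; rewrite !mxE linearP.
- exists (fun r : 'rV[R]_(\dim I).+1 => \sum_(j < (\dim I).+1) r ord0 j *: e`_j).
    move=> x /=; rewrite [RHS](coord_basis hb (memvf x)).
    by apply: eq_bigr => j _; rewrite mxE.
  by move=> r; apply/rowP => j; rewrite mxE coord_sum_free.
move=> x y; apply/rowP => k; rewrite !mxE.
have hx := splitI eI hb x; have hy := splitI eI hb y.
have key : forall x1 y1 a b, x1 \in I -> y1 \in I ->
    br (x1 + a *: Y') (y1 + b *: Y') = a *: y1 - b *: x1.
  move=> x1 y1 a b x1I y1I.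
  rewrite (brDl hL) !(brDr hL) (hab x1I y1I) add0r !(brZl hL) !(brZr hL).
  rewrite (brxx hL) !scaler0 addr0 (br_anti hL x1 Y) (hc _ x1I) (hc _ y1I) scalerN !scalerK //.
  by rewrite scalerN addrC.
have := key _ _ (coord e ord0 x) (coord e ord0 y) hx hy.
rewrite e0 !subrK => ->; rewrite -e0.
have ck : coord e k e`_0 = (ord0 == k)%:R := coord_free ord0 k fr.
have ck2 : c^-1 * coord e k Y = (ord0 == k)%:R by rewrite -(scalarZ (coord e k)).
rewrite (linearB (coord e k)) !(scalarZ (coord e k)) !(linearB (coord e k)) !(scalarZ (coord e k)) /= ck2.
have [->|k0] := eqVneq k ord0; rewrite /=; ring.
Qed.
Lemma caseA v : v \in I -> br Y v \notin <[v]>%VS ->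
  exists ip, inner_product ip /\ has_geodesic_basis ip br.
Proof.
move=> vI hw; pose w := br Y v.
have wI : w \in I by apply: hideal.
have v0 : v != 0.
  by apply/eqP => v0; move: hw; rewrite v0 (br0r hL) mem0v.
have w0 : w != 0 by apply/eqP => w0; move: hw; rewrite -/w w0 mem0v.
pose P := (<[v]> + <[w]>)%VS.
have PI : (P <= I)%VS by rewrite subv_add -!memvE vI wI.
have dcap : \dim (<[v]> :&: <[w]>)%VS = 0%N.
  have := dimvS (capvSr <[v]>%VS <[w]>%VS); rewrite dim_vline w0 => le1.
  have : \dim (<[v]> :&: <[w]>)%VS != 1%N.
    apply/negP => /eqP d1.
    have /eqP ceq : ((<[v]> :&: <[w]>)%VS == <[w]>%VS).
      by rewrite -(dimv_leqif_eq (capvSr _ _)).2 d1 dim_vline w0.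
    have : w \in (<[v]> :&: <[w]>)%VS by rewrite ceq memv_line.
    by rewrite memv_cap (negPf hw).
  by case: (\dim _) le1 => [|[|]].
have dP : \dim P = 2%N.
  by have := dimv_sum_cap <[v]>%VS <[w]>%VS; rewrite dcap addn0 !dim_vline v0 w0.
pose C := (I :\: P)%VS.
have dC : (\dim C + 2 = \dim I)%N.
  by have := dimv_cap_compl I P; rewrite (capv_idPr PI) dP addnC.
pose rs : seq V := vbasis C.
have rsI : forall r, r \in rs -> r \in I.
  by move=> r /vbasis_mem; apply/subvP/diffvSl.
have srs : size rs = \dim C by rewrite size_tuple.
pose Bs := [:: Y, v, w & rs].
have hb : basis_of fullv Bs.
  apply: basis_ext; first exact: memv_line.
    have -> : <<[:: v, w & rs]>>%VS = (C + P)%VS.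
      by rewrite !span_cons (span_basis (vbasisP C)) addvA addvC.
    by rewrite /C addv_diff addvSl.
  by rewrite /= srs -dC addn2.
pose e : ((size rs).+3).-tuple V := in_tuple Bs.
have hbe : basis_of fullv e by [].
have fr : free e := basis_free hbe.
pose i1 : 'I_((size rs).+3) := @Ordinal (size rs).+3 1 isT.
pose i2 : 'I_((size rs).+3) := @Ordinal (size rs).+3 2 isT.
pose c1 := coord e i1 (br Y w).
pose L := 1 + c1 ^+ 2.
have L0 : 0 < L by rewrite /L; have := sqr_ge0 c1; lra.
pose lam := fun i : 'I_((size rs).+3) => if val i == 2%N then L else 1.
have hlam : forall i, 0 < lam i by move=> i; rewrite /lam; case: ifP.
pose ip := ipw e lam.
have hip : inner_product ip := ipw_ip hbe hlam.
have eI : forall i : 'I_((size rs).+2), e`_(lift ord0 i) \in I.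
  move=> [[|[|j]] hj] //=; apply: rsI; apply: mem_nth; by rewrite -ltnS -ltnS.
have ipY : forall u, u \in I -> ip Y u = 0.
  move=> u uI; have := ipw_e hbe lam ord0 u; rewrite /ip /= => ->.
  by rewrite (@coordY0 _ e Y_notin eI hbe _ uI) mulr0.
have ipv : forall u, ip v u = coord e i1 u.
  by move=> u; have := ipw_e hbe lam i1 u; rewrite /= mul1r.
have ipw2 : forall u, ip w u = L * coord e i2 u.
  by move=> u; have := ipw_e hbe lam i2 u.
have ipvw : ip v w = 0 by rewrite ipv (coord_free i2 i1 fr).
have ipww : ip w w = L by rewrite ipw2 (coord_free i2 i2 fr) eqxx mulr1.
pose Q := fun x => ip x (br Y x).
pose Bl := fun x => ip v (br Y x) + ip x w.
have Blw : Bl w = c1 + L by rewrite /Bl ipv ipww.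
have Blw0 : 0 < Bl w by rewrite Blw /L; have := sqr_ge0 c1; nra.
have Qshift : forall x t, Q (x + t *: v) = Q x + t * Bl x.
  move=> x t; rewrite /Q /Bl (brDr hL) (brZr hL) -/w.
  rewrite !(ipDl hip, ipDr hip, ipZl hip, ipZr hip) ipvw.
  rewrite mulr0 addr0; ring.
have Bllin : forall x s, Bl (x + s *: w) = Bl x + s * Bl w.
  move=> x s'; rewrite /Bl (brDr hL) (brZr hL).
  rewrite !(ipDl hip, ipDr hip, ipZl hip, ipZr hip); ring.
pose sr := fun r => (1 - Bl r) / Bl w.
pose hr := fun r => r + sr r *: w.
pose g := fun r => hr r + (- Q (hr r)) *: v.
pose w' := w + (- (Q w / Bl w)) *: v.
pose GB := [:: Y, v, w' & map g rs].
have Blh : forall r, Bl (hr r) = 1.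
  by move=> r; rewrite Bllin /sr mulfVK // ?gt_eqF // addrC subrK.
have Qg : forall r, Q (g r) = 0.
  by move=> r; rewrite Qshift Blh mulr1 addrN.
have Qw' : Q w' = 0.
  by rewrite /w' Qshift mulNr mulfVK ?gt_eqF // addrN.
have Qv : Q v = 0 by rewrite /Q -/w ipvw.
have w'I : w' \in I by rewrite memvD // memvZ.
have gI : forall r, r \in rs -> g r \in I.
  by move=> r rI; rewrite /g /hr !memvD ?memvZ // rsI.
have ssub : (fullv <= <<GB>>)%VS.
  rewrite -(span_basis hb); apply/span_subvP => z.
  have Ys : Y \in <<GB>>%VS by apply: memv_span; rewrite inE eqxx.
  have vs : v \in <<GB>>%VS by apply: memv_span; rewrite !inE eqxx orbT.
  have w's : w' \in <<GB>>%VS by apply: memv_span; rewrite !inE eqxx !orbT.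
  have ws : w \in <<GB>>%VS.
    have -> : w = w' - (- (Q w / Bl w)) *: v by rewrite /w' addrK.
    by rewrite memvB // memvZ.
  rewrite !inE => /or4P [/eqP->|/eqP->|/eqP->|zr] //.
  have gs : g z \in <<GB>>%VS.
    by apply: memv_span; rewrite !inE (map_f g zr) !orbT.
  have -> : z = g z - (- Q (hr z)) *: v - sr z *: w by rewrite /g /hr !addrK.
  by rewrite !memvB // memvZ.
have hGB : basis_of fullv GB.
  by rewrite basisEdim ssub /= size_map (size_basis hbe).
exists ip; split => //; exists GB; split => // X XGB; split.
  exact: basis_not0 hGB XGB.
move: XGB; rewrite !inE => /or4P [/eqP->|/eqP->|/eqP->|/mapP [r rI ->]].
- by move=> Z; apply: G2.
- exact: G1.
- exact: G1.
- exact: (G1 hip (gI r rI) (Qg r)).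
Qed.
End Main.

Lemma abelian_geo (R : realFieldType) (V : vectType R) (br : V -> V -> V) :
  (forall x y, br x y = 0) ->
  exists ip : V -> V -> R, inner_product ip /\ has_geodesic_basis ip br.
Proof.
move=> h0; pose e := vbasis (fullv : {vspace V}).
have hl : forall i : 'I_(\dim (fullv : {vspace V})), 0 < (fun=> 1 : R) i by [].
have hip := ipw_ip (vbasisP fullv) hl.
exists (ipw e (fun=> 1)); split => //; exists e; split; first exact: vbasisP.
move=> X Xe; split; first exact: basis_not0 (vbasisP fullv) Xe.
by move=> Z; rewrite h0 (ip0r hip).
Qed.

Theorem theorem1p3 (R : realType) (V : vectType R) (br : V -> V -> V) :
  lie_bracket br ->
  has_abelian_ideal_codim1 br ->
  ~ (exists n : nat, (1 <= n)%N /\ isomorphic_to_A br n) ->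
  exists ip : V -> V -> R, inner_product ip /\ has_geodesic_basis ip br.
Proof.
move=> hL [I [hdim hideal hab]] hnot.
have [[v [vI hv]]|nA] := classic (exists v, v \in I /\ br (Y I) v \notin <[v]>%VS).
  exact: (caseA hL hdim hideal hab vI hv).
have hsc : forall v, v \in I -> br (Y I) v \in <[v]>%VS.
  by move=> v vI; apply/negPn/negP => hv; apply: nA; exists v.
have [c hc] := scalar_case hL hsc.
have [c0|c0] := eqVneq c 0.
  by apply: abelian_geo; apply: (abelian_case hL hdim hab hc); left.
have [I0|I0] := eqVneq I 0%VS.
  by apply: abelian_geo; apply: (abelian_case hL hdim hab hc); right.
exfalso; apply: hnot; exists (\dim I); split; first by rewrite lt0n dimv_eq0.
exact: (iso_case hL hdim hab c0 hc).
Qed.
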